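(* Let $L$ be a lattice with discriminant $d$, and let $G$ be a finite group acting on $L$ preserving the bilinear form. If $L^G\neq0$, then the restriction of the bilinear form makes $L^G$ a lattice whose discriminant divides $(d|G|)^r$, where $r=\mathrm{rk}(L^G)$.
   Context: A lattice is a free abelian group of finite positive rank with a non-degenerate integral symmetric bilinear form; its discriminant is the determinant of the Gram matrix in a $\mathbb{Z}$-basis. $L^G$ is the subgroup of $G$-invariant elements. *)

(* Defs.v *)
From HB Require Import structures.
From mathcomp Require Import all_boot all_order all_algebra all_fingroup.
Set Implicit Arguments. Unset Strict Implicit. Unset Printing Implicit Defensive.
Import GRing.Theory Num.Theory.
Local Open Scope ring_scope.

(* A lattice of rank n is modelled as Z^n (column vectors 'cV[int]_n) with
   bilinear form (u, v) |-> u^T B v, B an integral symmetric Gram matrix. *)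

Definition form (n : nat) (B : 'M[int]_n) (u v : 'cV[int]_n) : int :=
  (u^T *m B *m v) ord0 ord0.

Definition is_lattice_form (n : nat) (B : 'M[int]_n) : Prop :=
  B^T = B /\ \det B != 0.

Definition form_preserving_action (gT : finGroupType) (G : {group gT})
  (n : nat) (rho : gT -> 'M[int]_n) (B : 'M[int]_n) : Prop :=
  rho 1%g = 1%:M /\
  (forall x y, x \in G -> y \in G -> rho (x * y)%g = rho x *m rho y) /\
  (forall g, g \in G -> (rho g)^T *m B *m rho g = B).

Definition G_invariant (gT : finGroupType) (G : {group gT}) (n : nat)
  (rho : gT -> 'M[int]_n) (v : 'cV[int]_n) : Prop :=
  forall g, g \in G -> rho g *m v = v.

Definition is_Zbasis_of_invariants (gT : finGroupType) (G : {group gT})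
  (n : nat) (rho : gT -> 'M[int]_n) (r : nat) (b : 'M[int]_(n, r)) : Prop :=
  (forall j : 'I_r, G_invariant G rho (col j b)) /\
  (forall c : 'cV[int]_r, b *m c = 0 -> c = 0) /\
  (forall v : 'cV[int]_n, G_invariant G rho v -> exists c : 'cV[int]_r, v = b *m c).

Definition gram (n r : nat) (B : 'M[int]_n) (b : 'M[int]_(n, r)) : 'M[int]_r :=
  b^T *m B *m b.

(* Main.v *)
Require Import Defs.
From HB Require Import structures.
From mathcomp Require Import all_boot all_order all_algebra all_fingroup.
Import GRing.Theory Num.Theory.
Local Open Scope ring_scope.

Lemma col_mulmx (R : comRingType) m n p (A : 'M[R]_(m, n)) (M : 'M[R]_(n, p)) j :
  col j (A *m M) = A *m col j M.
Proof. by rewrite !colE mulmxA. Qed.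

Lemma colP' (R : comRingType) m n (M N : 'M[R]_(m, n)) :
  (forall j, col j M = col j N) -> M = N.
Proof.
move=> H; apply/matrixP => i j.
by have /matrixP/(_ i ord0) := H j; rewrite !mxE.
Qed.

Lemma span_mx (gT : finGroupType) (G : {group gT}) n (rho : gT -> 'M[int]_n)
  r (b : 'M[int]_(n, r)) m (M : 'M[int]_(n, m)) :
  is_Zbasis_of_invariants G rho b ->
  (forall j, G_invariant G rho (col j M)) -> exists Y, M = b *m Y.
Proof.
move=> [_ [_ Hs]] HM.
have /fin_all_exists [f Hf] : forall j : 'I_m, exists c, col j M = b *m c.
  by move=> j; apply: Hs.
exists (\matrix_(i, j) f j i ord0).
apply: colP' => j; rewrite col_mulmx Hf; congr (_ *m _).
by apply/matrixP => i k; rewrite !mxE ord1.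
Qed.

Lemma inj_mx (gT : finGroupType) (G : {group gT}) n (rho : gT -> 'M[int]_n)
  r (b : 'M[int]_(n, r)) m (M : 'M[int]_(r, m)) :
  is_Zbasis_of_invariants G rho b -> b *m M = 0 -> M = 0.
Proof.
move=> [_ [Hi _]] H; apply: colP' => j.
by rewrite linear0 (Hi (col j M)) // -col_mulmx H linear0.
Qed.

Lemma rhoP (gT : finGroupType) (G : {group gT}) n (rho : gT -> 'M[int]_n) B :
  form_preserving_action G rho B -> forall g, g \in G ->
  rho g *m (\sum_(h in G) rho h) = \sum_(h in G) rho h.
Proof.
move=> [H1 [HM _]] g gG.
rewrite mulmx_sumr [RHS](reindex_inj (mulgI g)) /=.
apply: eq_big => [h|h hG]; first by rewrite groupMl.
by rewrite HM.
Qed.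

Lemma BP (gT : finGroupType) (G : {group gT}) n (rho : gT -> 'M[int]_n) B :
  form_preserving_action G rho B ->
  (\sum_(h in G) rho h)^T *m B = B *m \sum_(h in G) rho h.
Proof.
move=> [H1 [HM HB]].
have E g : g \in G -> (rho g)^T *m B = B *m rho (g^-1)%g.
  move=> gG; rewrite -{2}(HB g gG) -!mulmxA -HM ?groupV // mulgV H1 mulmx1.
  done.
rewrite linear_sum /= mulmx_suml mulmx_sumr [RHS](reindex_inj invg_inj) /=.
apply: eq_big => [h|h hG]; first by rewrite groupV.
by rewrite E.
Qed.

Lemma inv_iff (gT : finGroupType) (G : {group gT}) n (rho : gT -> 'M[int]_n) B v :
  form_preserving_action G rho B ->
  G_invariant G rho v <-> (\sum_(h in G) rho h) *m v = v *+ #|G|.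
Proof.
move=> Hf; split.
  move=> Hv; rewrite mulmx_suml -sumr_const; apply: eq_bigr => h hG.
  by rewrite Hv.
move=> Hv g gG /=.
have := congr1 (mulmx (rho g)) Hv.
rewrite mulmxA (@rhoP _ _ _ _ _ Hf) // Hv -scaler_nat -scalemxAr => /matrixP E.
apply/matrixP => i j; have := E i j; rewrite !mxE.
move/mulfI => -> //.
by rewrite pnatr_eq0 -lt0n; apply/card_gt0P; exists 1%g.
Qed.

Lemma exists_basis (gT : finGroupType) (G : {group gT}) n (rho : gT -> 'M[int]_n) B :
  form_preserving_action G rho B ->
  exists r0 (b0 : 'M[int]_(n, r0)) (W0 : 'M[int]_(r0, n)),
    is_Zbasis_of_invariants G rho b0 /\ W0 *m b0 = 1%:M.
Proof.
move=> Hf.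
set P := \sum_(h in G) rho h.
set A := P - (#|G|%:R)%:M.
have HA v : G_invariant G rho v <-> A *m v = 0.
  have := @inv_iff _ _ _ _ _ v Hf.
  rewrite /A mulmxBl mul_scalar_mx scaler_nat => -[H1 H2].
  split => [/H1 ->|/eqP]; [by rewrite subrr | rewrite subr_eq0 => /eqP; exact: H2].
have [L Lu [R Ru [d _ HA']]] := int_Smith_normal_form A.
set D := \matrix_(i, j) _ in HA'.
pose Z := [set i : 'I_n | d`_i == 0].
pose E : 'M[int]_(n, #|Z|) := \matrix_(i, k) ((i == enum_val k)%:R).
have ETE : E^T *m E = 1%:M.
  apply/matrixP => k l; rewrite !mxE (bigD1 (enum_val k)) //= big1.
    by rewrite !mxE eqxx mul1r addr0 (inj_eq enum_val_inj).
  by move=> i ne; rewrite !mxE (negbTE ne) mul0r.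
have DE : D *m E = 0.
  apply/matrixP => i k; rewrite !mxE (bigD1 i) //= big1.
    rewrite !mxE eqxx mulr1n addr0; case: eqP => [->|]; last by rewrite mulr0.
    by have := enum_valP k; rewrite inE => /eqP ->; rewrite mul0r.
  move=> j ne; rewrite !mxE (_ : (i == j :> nat) = false) ?mulr0n ?mul0r //.
  by apply/negbTE; rewrite eq_sym.
have EET : E *m E^T = \matrix_(i, j) ((i == j) && (i \in Z))%:R.
  apply/matrixP => i j; rewrite !mxE.
  case: (boolP (i \in Z)) => iZ; last first.
    rewrite andbF big1 // => k _; rewrite !mxE.
    case: eqP => [Ei|]; last by rewrite mul0r.
    by move: iZ; rewrite Ei enum_valP.
  rewrite andbT (bigD1 (enum_rank_in iZ i)) //= big1.
    by rewrite !mxE enum_rankK_in // eqxx mul1r addr0 eq_sym.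
  move=> k ne; rewrite !mxE; case: eqP => [Ei|]; last by rewrite mul0r.
  exfalso; move/eqP: ne; apply; apply: enum_val_inj.
  by rewrite enum_rankK_in.
exists #|Z|, (invmx R *m E), (E^T *m R).
have W0b0 : E^T *m R *m (invmx R *m E) = 1%:M.
  by rewrite mulmxA -(mulmxA _ R) mulmxV // mulmx1 ETE.
split=> //; split; [|split].
- move=> j; apply/HA; rewrite -col_mulmx.
  rewrite HA' mulmxA -(mulmxA _ R) mulmxV // mulmx1 -mulmxA DE mulmx0.
  by rewrite linear0.
- move=> c Hc; have := congr1 (mulmx (E^T *m R)) Hc.
  by rewrite mulmxA W0b0 mul1mx mulmx0.
- move=> v /HA; rewrite HA' -!mulmxA => /(congr1 (mulmx (invmx L))).
  rewrite mulKmx // mulmx0 => Hu.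
  exists (E^T *m (R *m v)).
  rewrite -mulmxA; suff -> : E *m (E^T *m (R *m v)) = R *m v by rewrite mulKmx.
  move: (R *m v) Hu => u Hu.
  have Hi : forall i : 'I_n, d`_i * u i ord0 = 0.
    move=> i; have /matrixP/(_ i ord0) := Hu; rewrite !mxE (bigD1 i) //= big1.
      by rewrite !mxE eqxx mulr1n addr0.
    move=> j ne; rewrite !mxE (_ : (i == j :> nat) = false) ?mulr0n ?mul0r //.
    by apply/negbTE; rewrite eq_sym.
  apply/matrixP => i k; rewrite ord1 mulmxA EET !mxE (bigD1 i) //= big1.
    rewrite !mxE eqxx /= addr0; case: (boolP (i \in Z)) => iZ.
      by rewrite mul1r.
    rewrite mul0r; apply/esym/eqP; move: iZ (Hi i); rewrite inE => nz.
    by move/eqP; rewrite mulf_eq0 (negbTE nz).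
  by move=> j ne; rewrite !mxE eq_sym (negbTE ne) mul0r.
Qed.

Theorem lemma2p1 (gT : finGroupType) (G : {group gT}) (n : nat)
  (B : 'M[int]_n) (rho : gT -> 'M[int]_n) :
  (0 < n)%N ->
  is_lattice_form B ->
  form_preserving_action G rho B ->
  (exists v : 'cV[int]_n, G_invariant G rho v /\ v != 0) ->
  (exists (r : nat) (b : 'M[int]_(n, r)),
      (0 < r)%N /\ is_Zbasis_of_invariants G rho b) /\
  (forall (r : nat) (b : 'M[int]_(n, r)),
      is_Zbasis_of_invariants G rho b ->
      \det (gram B b) != 0 /\
      (\det (gram B b) %| (\det B * (#|G|%:Z)) ^+ r)%Z).
Proof.
move=> n0 [BT dB] Hf [v0 [v0inv v0nz]].
have [r0 [b0 [W0 [Hb0 W0b0]]]] := @exists_basis _ _ _ _ _ Hf.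
split.
  exists r0, b0; split => //.
  rewrite lt0n; apply/negP => /eqP r00.
  have [c Hc] := Hb0.2.2 _ v0inv.
  move: v0nz; rewrite Hc (_ : c = 0) ?mulmx0 ?eqxx //.
  apply/matrixP => i j; exfalso.
  by move: (leq_ltn_trans (leq0n i) (ltn_ord i)); rewrite r00.
move=> r b Hb.
have [X HX] := @span_mx _ _ _ _ _ _ _ _ Hb0 Hb.1.
have [Y HY] := @span_mx _ _ _ _ _ _ _ _ Hb Hb0.1.
have YX : Y *m X = 1%:M.
  apply/eqP; rewrite -subr_eq0; apply/eqP; apply: (@inj_mx _ _ _ _ _ _ _ _ Hb).
  by rewrite mulmxBr mulmxA -HY -HX mulmx1 subrr.
set W := Y *m W0.
have Wb : W *m b = 1%:M by rewrite HX /W mulmxA -(mulmxA Y) W0b0 mulmx1 YX.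
set P := \sum_(h in G) rho h.
have Pcol : forall j, G_invariant G rho (col j P).
  by move=> j g gG; rewrite -col_mulmx (@rhoP _ _ _ _ _ Hf).
have [Zm HZ] := @span_mx _ _ _ _ _ _ _ _ Hb Pcol.
have bWP : b *m W *m P = P.
  by rewrite HZ mulmxA -(mulmxA b W b) Wb mulmx1.
have Pb : P *m b = b *+ #|G|.
  apply: colP' => j; rewrite col_mulmx raddfMn /=.
  exact: (@inv_iff _ _ _ _ _ _ Hf).1 (Hb.1 j).
set k := \det B * #|G|%:Z.
have key : gram B b *m (W *m P *m \adj B *m W^T) = k%:M.
  have -> : gram B b *m (W *m P *m \adj B *m W^T)
          = b^T *m (B *m (b *m W *m P)) *m \adj B *m W^T.
    by rewrite /gram !mulmxA.
  rewrite bWP -(@BP _ _ _ _ _ Hf) mulmxA -trmx_mul Pb -(mulmxA _ B) mul_mx_adj.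
  rewrite mul_mx_scalar raddfMn /= -scaler_nat scalerA -scalemxAl.
  by rewrite -trmx_mul Wb trmx1 scalemx1 /k natz.
have := congr1 determinant key; rewrite det_mulmx det_scalar => Hdet.
split.
  apply/negP => /eqP h0; move: Hdet; rewrite h0 mul0r => /esym/eqP.
  rewrite expf_eq0 mulf_eq0 (negbTE dB) /=.
  by rewrite (_ : (#|G|%:Z == 0) = false) ?andbF //; have := cardG_gt0 G; case: #|G|.
by apply/dvdzP; exists (\det (W *m P *m \adj B *m W^T)); rewrite -Hdet mulrC.
Qed.
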